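(* Let $\mathsf A$ be the Manacher array of some string of length $n$, and let $\mathsf F$ be the corresponding palindromic fingerprint. Let $G=G(\mathsf F)$ be its restriction graph. Then: (i) For every proper vertex coloring $\psi:V(G)\to\Sigma$ that uses exactly $k$ colors, the string $T=\psi'(1)\psi'(2)\cdots\psi'(n)$, where $\psi'(i)=\psi(C)$ for the unique vertex $C$ with $i\in C$, has Manacher array $\mathsf A$ and exactly $k$ distinct symbols. (ii) Conversely, for every string $T$ of length $n$ with Manacher array $\mathsf A$, the map $\psi(C):=T[i]$ for any $i\in C$ is well defined and is a proper vertex coloring of $G$, and these two constructions are mutually inverse. In particular, the minimum number of distinct symbols in a string with Manacher array $\mathsf A$ equals $\chi(G)$.
   Context: A substring $S[i..j]$ (including the empty substring $S[i..i-1]$) is a maximal palindrome of $S$ if it is a palindrome and $S[i-1..j+1]$ is either undefined (i.e. $i=1$ or $j=|S|$) or not a palindrome. The palindromic fingerprint $\mathsf F$ of a string $S$ of length $n$ is the set of pairs $(i,j)$ such that $S[i..j]$ is a maximal palindrome (with $(i,i-1)$ for empty ones); $|\mathsf F|:=n$. The fingerprint and the Manacher array determine each other. A string $T$ is a reconstruction of $\mathsf F$ if $|T|=n$ and the fingerprint of $T$ is $\mathsf F$. Equality graph $G_=(\mathsf F)$: vertex set $\{1,\dots,n\}$, with $i,j$ ($i<j$) adjacent iff there is $(a,b)\in\mathsf F$ with $a\le i<j\le b$ and $i+j=a+b$ (so $T[i]=T[j]$ in every reconstruction). Restriction graph $G(\mathsf F)$: its vertices are the connected components $C_1,\dots,C_\ell$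 of $G_=(\mathsf F)$ (these partition $\{1,\dots,n\}$), and $C,C'$ are adjacent iff there exist $i\in C$, $j\in C'$ with $1\le i<j\le n$ and $(i+1,j-1)\in\mathsf F$. A proper coloring assigns colors to vertices so that adjacent vertices get different colors; $\chi(G)$ is the chromatic number. The Manacher array of $S$ of length $n$: $\mathsf A[2k-1]$ is the largest $r\ge0$ with $S[k-r..k+r]$ a palindrome inside $S$, and $\mathsf A[2k]$ the largest $r\ge0$ with $S[k-r+1..k+r]$ a palindrome inside $S$. *)

(* Defs.v *)
(* Strings of length n over an alphabet (eqType) Sigma are
   modelled as functions S : nat -> Sigma, of which only the positions
   1..n matter (S i is the paper's S[i]). *)
From mathcomp Require Import all_boot.
Set Implicit Arguments. Unset Strict Implicit. Unset Printing Implicit Defensive.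

Section Strings.
Variable Sigma : eqType.

Definition pal (S : nat -> Sigma) (i j : nat) : bool :=
  all (fun t => S t == S (i + j - t)) (iota i (j.+1 - i)).

Definition inside (n i j : nat) : bool := [&& 1 <= i, i <= j.+1 & j <= n].

(* r is admissible at Manacher index m:
   m = 2k-1 : S[k-r..k+r] is a palindrome inside S
   m = 2k   : S[k-r+1..k+r] is a palindrome inside S *)
Definition manacher_ok (n : nat) (S : nat -> Sigma) (m r : nat) : bool :=
  if odd m then
    let k := m.+1./2 in [&& r < k, k + r <= n & pal S (k - r) (k + r)]
  else
    let k := m./2 in [&& r <= k, k + r <= n & pal S (k.+1 - r) (k + r)].

(* Manacher array A[m], meaningful for 1 <= m <= 2n. *)
Definition manacher (n : nat) (S : nat -> Sigma) (m : nat) : nat :=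
  \max_(r < n.+1 | manacher_ok n S m r) r.

Definition has_manacher (n : nat) (T : nat -> Sigma) (A : nat -> nat) : Prop :=
  forall m, 0 < m <= n.*2 -> manacher n T m = A m.

(* Palindromic fingerprint: (i,j) in F iff S[i..j] is a maximal palindrome
   (including the empty ones (i,i-1)). *)
Definition fingerprint (n : nat) (S : nat -> Sigma) (i j : nat) : bool :=
  [&& inside n i j, pal S i j & [|| i == 1, j == n | ~~ pal S i.-1 j.+1]].

Definition nsym (n : nat) (T : nat -> Sigma) : nat :=
  size (undup [seq T i | i <- iota 1 n]).

End Strings.

Section Graphs.
Variables (n : nat) (F : rel nat).

Definition eq_edge (i j : nat) : bool :=
  (i < j) && has (fun a => F a (i + j - a)) (iota 0 i.+1).

(* Vertices of G_= : the ordinal u : 'I_n stands for position u+1. *)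
Definition geq_rel : rel 'I_n :=
  fun u v => eq_edge u.+1 v.+1 || eq_edge v.+1 u.+1.

Definition comp (u : 'I_n) : {set 'I_n} := [set v | connect geq_rel u v].

Definition comps : {set {set 'I_n}} := [set comp u | u : 'I_n].

(* adjacency in G(F): exist i \in C, j \in C', 1 <= i < j <= n,
   (i+1, j-1) \in F  (positions i = u+1, j = v+1). *)
Definition rg_adj (C C' : {set 'I_n}) : bool :=
  [exists u in C, exists v in C', (u < v) && F u.+2 v].

Definition proper_coloring (Sigma : Type) (psi : {set 'I_n} -> Sigma) : Prop :=
  forall C C', C \in comps -> C' \in comps -> rg_adj C C' -> psi C <> psi C'.

Definition ncolors (Sigma : eqType) (psi : {set 'I_n} -> Sigma) : nat :=
  size (undup [seq psi C | C <- enum comps]).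

Definition string_of_coloring (Sigma : Type) (psi : {set 'I_n} -> Sigma)
    (i : nat) : Sigma :=
  match @insub nat (fun k => k < n) 'I_n i.-1 with
  | Some u => psi (comp u)
  | None => psi set0
  end.

Definition coloring_of_string (Sigma : Type) (T : nat -> Sigma)
    (C : {set 'I_n}) : Sigma :=
  match [pick u in C] with
  | Some u => T u.+1
  | None => T 0
  end.

Definition is_chromatic_number (k : nat) : Prop :=
  (exists psi : {set 'I_n} -> nat,
      proper_coloring psi /\ forall C, C \in comps -> psi C < k) /\
  (forall (k' : nat) (psi : {set 'I_n} -> nat),
      proper_coloring psi -> (forall C, C \in comps -> psi C < k') -> k <= k').

End Graphs.

Definition is_min_symbols (n : nat) (A : nat -> nat) (k : nat) : Prop :=
  (exists T : nat -> nat, has_manacher n T A /\ nsym n T = k) /\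
  (forall (Sigma : eqType) (T : nat -> Sigma), has_manacher n T A -> k <= nsym n T).

(* Main.v *)
Require Import Defs.
From mathcomp Require Import all_boot zify.
Set Implicit Arguments. Unset Strict Implicit. Unset Printing Implicit Defensive.

Section Pal.
Variable X : eqType.
Implicit Types (T : nat -> X).

Lemma palP T a b : reflect (forall t, a <= t <= b -> T t = T (a + b - t)) (pal T a b).
Proof.
apply: (iffP allP) => H t Ht.
- apply/eqP/H; rewrite mem_iota; lia.
- apply/eqP/H; move: Ht; rewrite mem_iota; lia.
Qed.

Lemma pal_nest T a b a' b' : pal T a b -> a <= a' -> a' + b' = a + b -> pal T a' b'.
Proof.
move=> /palP H h1 h2; apply/palP => t Ht.
rewrite h2; apply: H; lia.
Qed.

Lemma pal_ext T a b : 1 <= a -> a <= b.+1 -> pal T a b -> T a.-1 = T b.+1 ->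
  pal T a.-1 b.+1.
Proof.
move=> h1 h2 /palP H He; apply/palP => t Ht.
have [->|ne1] := eqVneq t a.-1; first by rewrite He; congr T; lia.
have [->|ne2] := eqVneq t b.+1; first by rewrite -He; congr T; lia.
rewrite H; last lia. congr T; lia.
Qed.

Lemma pal_ends T a b : pal T a b -> a <= b -> T a = T b.
Proof. move=> /palP H h; rewrite H; last lia. congr T; lia. Qed.

Lemma pal_triv T a b : b <= a -> pal T a b.
Proof. move=> h; apply/palP => t Ht; congr T; lia. Qed.

End Pal.

Section Man.
Variable X : eqType.
Variable n : nat.
Implicit Types (T : nat -> X).

Lemma ok_down T m r r' : manacher_ok n T m r -> r' <= r -> manacher_ok n T m r'.
Proof.
rewrite /manacher_ok; case: ifP => _.
- set k := m.+1./2 => /and3P [h1 h2 h3] h; apply/and3P; split; try lia.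
  apply: pal_nest h3 _ _; lia.
- set k := m./2 => /and3P [h1 h2 h3] h; apply/and3P; split; try lia.
  apply: pal_nest h3 _ _; lia.
Qed.

Lemma ok_bound T m r : manacher_ok n T m r -> r < n.+1.
Proof. rewrite /manacher_ok; case: ifP => _ /and3P [? ? ?]; lia. Qed.

Lemma ok0 T m : 0 < m <= n.*2 -> manacher_ok n T m 0.
Proof.
move=> hm; rewrite /manacher_ok; case: ifP => ho; apply/and3P; split; try lia;
  apply: pal_triv; lia.
Qed.

Lemma okE T m r : 0 < m <= n.*2 -> manacher_ok n T m r = (r <= manacher n T m).
Proof.
move=> hm; apply/idP/idP => h.
- have hb := ok_bound h.
  exact: (@leq_bigmax_cond _ (fun i : 'I_n.+1 => manacher_ok n T m i) (fun i => i : nat) (Ordinal hb)).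
- move: h; rewrite /manacher.
  have h0 : manacher_ok n T m (@Ordinal n.+1 0 isT) by exact: ok0.
  rewrite (bigmax_eq_arg _ h0).
  case: arg_maxnP => //= i hi _ hr; exact: ok_down hi hr.
Qed.

Lemma half_eq x y : x = y.*2 \/ x = (y.*2).+1 -> x./2 = y.
Proof.
case=> ->; first exact: doubleK.
by rewrite -[(y.*2).+1]/(true + y.*2) half_bit_double.
Qed.

End Man.

Lemma ok_pal n a b : inside n a b -> 1 < a + b ->
  exists r, forall (X : eqType) (T : nat -> X), manacher_ok n T (a + b).-1 r = pal T a b.
Proof.
move=> /and3P [h1 h2 h3] hs.
have [q [hq|hq]] : exists q, a + b = (q.*2).+1 \/ a + b = q.*2.
  exists (a + b)./2; have := odd_double_half (a + b).
  by case: (odd (a + b)) => /= h; [left|right]; rewrite -[in LHS]h.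
- have hq2 : a + b = (q + q).+1 by rewrite addnn.
  exists (b - q) => X T; rewrite /manacher_ok.
  have -> : odd (a + b).-1 = false by rewrite hq /= odd_double.
  have -> : (a + b).-1./2 = q by apply: half_eq; left; rewrite hq.
  clear hq.
  have -> : q.+1 - (b - q) = a by lia.
  have -> : q + (b - q) = b by lia.
  have -> : b - q <= q by lia.
  by rewrite h3.
- have hq2 : a + b = q + q by rewrite addnn.
  clear hq.
  have hm : (a + b).-1 = (q.-1.*2).+1.
    rewrite -addnn; lia.
  exists (b - q) => X T; rewrite /manacher_ok hm /= odd_double /=.
  rewrite doubleK (_ : q.-1.+1 = q); last lia.
  have -> : q - (b - q) = a by lia.
  have -> : q + (b - q) = b by lia.
  have -> : b - q < q by lia.
  by rewrite h3.
Qed.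

Section Main.
Variable Sigma0 : eqType.
Variable n : nat.
Variable S : nat -> Sigma0.
Local Notation F := (fingerprint n S).

Lemma ext_max a b : inside n a b -> pal S a b ->
  exists2 a', a' <= a & F a' (a + b - a').
Proof.
elim: a b => [|a IH] b; first by case/and3P.
move=> hin hp.
have [ha|ha] := eqVneq a 0.
  exists a.+1 => //; rewrite /fingerprint addKn hin hp; subst a; by [].
have [hb|hb] := eqVneq b n.
  exists a.+1 => //; rewrite /fingerprint addKn hin hp hb eqxx; by rewrite !orbT.
case hq: (pal S a b.+1).
  have hin' : inside n a b.+1 by move: hin hb ha; rewrite /inside; lia.
  have [a' h1 h2] := IH _ hin' hq; exists a'; first by lia.
  by rewrite (_ : a.+1 + b - a' = a + b.+1 - a'); [|lia].
exists a.+1 => //; rewrite /fingerprint addKn hin hp /= hq; by rewrite !orbT.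
Qed.

Lemma shrink a b : inside n a b -> ~~ pal S a b ->
  exists a', [/\ a < a', a' + a' <= (a + b).+1, pal S a' (a + b - a') & ~~ pal S a'.-1 (a + b - a').+1].
Proof.
move=> hin hp; set s := a + b.
have key : forall c, a <= c -> c + c <= s.+1 -> pal S c (s - c) ->
  exists a', [/\ a < a', a' <= c, pal S a' (s - a') & ~~ pal S a'.-1 (s - a').+1].
  elim=> [|c IH] hac hc hpc.
    by move: hin; rewrite /inside; lia.
  have [e|ne] := eqVneq a c.+1.
    by move: hp hpc; rewrite /s e addKn => /negP.
  case hq: (pal S c (s - c)).
    have [a' [h1 h2 h3 h4]] := IH ltac:(lia) ltac:(lia) hq.
    exists a'; split => //; lia.
  exists c.+1; split => //; first lia.
  by rewrite /= (_ : (s - c.+1).+1 = s - c) ?hq //; move: hin; rewrite /inside /s; lia.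
have es : s = a + b by [].
clearbody s.
have [q hq] : exists q, s = q + q \/ s = (q + q).+1.
  exists s./2; have := odd_double_half s; rewrite -addnn.
  by case: (odd s) => /= h; [right|left]; rewrite -[in LHS]h.
have hs1 : a <= s - q by move: hin; rewrite /inside; lia.
have [a' [h1 h2 h3 h4]] := key _ hs1 ltac:(lia) ltac:(apply: pal_triv; lia).
exists a'; split => //; move: hin; rewrite /inside; lia.
Qed.

Lemma SP_of (Sigma : eqType) (T : nat -> Sigma) :
  (forall a b, F a b -> pal T a b) ->
  (forall a b, F a b -> 1 < a -> b < n -> T a.-1 != T b.+1) ->
  forall a b, inside n a b -> pal T a b = pal S a b.
Proof.
move=> P1 P2 a b hin.
case hS: (pal S a b).
  have [a' h1 h2] := ext_max hin hS.
  apply: pal_nest (P1 _ _ h2) _ _; lia.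
have [a' [h1 h2 h3 h4]] := shrink hin (negbT hS).
have hF : F a' (a + b - a').
  rewrite /fingerprint h3 h4 !orbT !andbT.
  move: hin; rewrite /inside => /and3P [? ? ?]; apply/and3P; split; lia.
have hn : a + b - a' < n by move: hin; rewrite /inside; lia.
have h5 : 1 < a' by move: hin; rewrite /inside; lia.
have := P2 _ _ hF h5 hn.
apply: contraNF => hT.
have : pal T a'.-1 (a + b - a').+1.
  apply: pal_nest hT _ _; move: hin; rewrite /inside; lia.
move/pal_ends => -> //; lia.
Qed.

Lemma SP_has (Sigma : eqType) (T : nat -> Sigma) :
  (forall a b, inside n a b -> pal T a b = pal S a b) ->
  has_manacher n T (manacher n S).
Proof.
move=> H m _; rewrite /manacher; apply: eq_bigl => r.
rewrite /manacher_ok; case: ifP => _.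
- set k := m.+1./2.
  case h1: (r < k); case h2: (k + r <= n) => //=; apply: H.
  rewrite /inside; lia.
- set k := m./2.
  case h1: (r <= k); case h2: (k + r <= n) => //=; apply: H.
  rewrite /inside; lia.
Qed.

Lemma has_SP (Sigma : eqType) (T : nat -> Sigma) :
  has_manacher n T (manacher n S) ->
  forall a b, inside n a b -> pal T a b = pal S a b.
Proof.
move=> H a b hin.
have [hs|hs] := leqP (a + b) 1.
  by rewrite !pal_triv //; move: hin; rewrite /inside; lia.
have [r hr] := ok_pal hin hs.
have hm : 0 < (a + b).-1 <= n.*2 by move: hin; rewrite /inside -addnn; lia.
by rewrite -!hr !okE // H.
Qed.

End Main.

Section G.
Variable n : nat.
Variable F : rel nat.

Lemma geq_sym : symmetric (@geq_rel n F).
Proof. by move=> u v; rewrite /geq_rel orbC. Qed.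

Lemma comp_eq (u v : 'I_n) : v \in Defs.comp F u -> Defs.comp F v = Defs.comp F u.
Proof.
rewrite inE => huv; apply/setP => w; rewrite !inE.
have cs := sym_connect_sym geq_sym.
apply/idP/idP => h.
- exact: connect_trans huv h.
- by apply: connect_trans h; rewrite cs.
Qed.

Lemma comp_self (u : 'I_n) : u \in Defs.comp F u.
Proof. by rewrite inE connect0. Qed.

Lemma comp_conn (u v : 'I_n) : connect (@geq_rel n F) u v -> Defs.comp F u = Defs.comp F v.
Proof. by move=> h; symmetry; apply: comp_eq; rewrite inE. Qed.

Lemma sofc_val (Sigma : Type) (psi : {set 'I_n} -> Sigma) (u : 'I_n) :
  string_of_coloring F psi u.+1 = psi (Defs.comp F u).
Proof.
rewrite /string_of_coloring /=; case: insubP => [u' _ e|]; last by rewrite ltn_ord.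
by congr (psi (Defs.comp F _)); apply: val_inj.
Qed.


Lemma cofs_val (Sigma : Type) (T : nat -> Sigma) (C : {set 'I_n}) (u : 'I_n) :
  u \in C -> (forall v, v \in C -> T v.+1 = T u.+1) ->
  coloring_of_string T C = T u.+1.
Proof.
move=> hu H; rewrite /coloring_of_string; case: pickP => [w hw|/(_ u)]; last by rewrite hu.
exact: H.
Qed.

Lemma comps_comp (u : 'I_n) : Defs.comp F u \in comps n F.
Proof. by apply/imsetP; exists u. Qed.

Lemma in_comps (C : {set 'I_n}) : C \in comps n F -> exists u, C = Defs.comp F u.
Proof. by case/imsetP => u _ ->; exists u. Qed.

End G.

Section M.
Variable Sigma0 : eqType.
Variable n : nat.
Variable S : nat -> Sigma0.
Local Notation F := (fingerprint n S).

Lemma sofc_edge (Sigma : Type) (psi : {set 'I_n} -> Sigma) i j :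
  1 <= i -> j <= n -> i < j -> eq_edge F i j ->
  string_of_coloring F psi i = string_of_coloring F psi j.
Proof.
move=> h1 h2 h3 he.
have hi : i.-1 < n by lia.
have hj : j.-1 < n by lia.
have -> : i = (Ordinal hi).+1 by rewrite /=; lia.
have -> : j = (Ordinal hj).+1 by rewrite /=; lia.
rewrite !sofc_val; congr psi; apply: comp_conn; apply: connect1.
by rewrite /geq_rel /= !prednK ?he //; lia.
Qed.

Lemma eq_edgeI i j a : i < j -> a <= i -> F a (i + j - a) -> eq_edge F i j.
Proof.
move=> h1 h2 h3; rewrite /eq_edge h1 andTb; apply/hasP; exists a; last by [].
by rewrite mem_iota; lia.
Qed.

Lemma sofc_P1 (Sigma : eqType) (psi : {set 'I_n} -> Sigma) a b :
  F a b -> pal (string_of_coloring F psi) a b.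
Proof.
move=> hF; have := hF; case/and3P => /and3P [h1 h2 h3] _ _; apply/palP => t ht.
have [lt|gt|eq] := ltngtP t (a + b - t).
- apply: (sofc_edge psi); [lia|lia|lia|].
  apply: (eq_edgeI (a := a)); [lia|lia|].
  by rewrite (_ : t + (a + b - t) - a = b) //; lia.
- symmetry; apply: (sofc_edge psi); [lia|lia|lia|].
  apply: (eq_edgeI (a := a)); [lia|lia|].
  by rewrite (_ : a + b - t + t - a = b) //; lia.
- by rewrite -eq.
Qed.

Lemma sofc_P2 (Sigma : eqType) (psi : {set 'I_n} -> Sigma) :
  proper_coloring F psi ->
  forall a b, F a b -> 1 < a -> b < n ->
  string_of_coloring F psi a.-1 != string_of_coloring F psi b.+1.
Proof.
move=> pr a b hF h1 h2.
have hu : a.-2 < n by move: hF => /and3P [/and3P [? ? ?] _ _]; lia.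
have -> : a.-1 = (Ordinal hu).+1 by rewrite /=; lia.
rewrite -[b.+1]/((Ordinal h2 : 'I_n).+1) !sofc_val; apply/eqP.
apply: pr; try exact: comps_comp.
apply/existsP; exists (Ordinal hu); rewrite comp_self /=.
apply/existsP; exists (Ordinal h2); rewrite comp_self /=.
have -> : a.-2.+2 = a by lia.
rewrite hF andbT; move: hF => /and3P [/and3P [? ? ?] _ _]; lia.
Qed.

Lemma sofc_manacher (Sigma : eqType) (psi : {set 'I_n} -> Sigma) :
  proper_coloring F psi ->
  has_manacher n (string_of_coloring F psi) (manacher n S).
Proof.
move=> pr; apply: SP_has; apply: SP_of.
- exact: sofc_P1.
- exact: sofc_P2.
Qed.

End M.

Section M2.
Variable Sigma0 : eqType.
Variable n : nat.
Variable S : nat -> Sigma0.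
Local Notation F := (fingerprint n S).
Local Notation A := (manacher n S).

Section T.
Variable Sigma : eqType.
Variable T : nat -> Sigma.
Hypothesis HT : has_manacher n T A.

Lemma T_eq_edge i j : j <= n -> eq_edge F i j -> T i = T j.
Proof.
move=> hj /andP [hij /hasP [a0 ha0 hF]].
move: ha0; rewrite mem_iota => ha0.
have hin : inside n a0 (i + j - a0) by case/and3P: hF.
have hpS : pal S a0 (i + j - a0) by case/and3P: hF.
have := hpS; rewrite -(has_SP HT hin) => /palP H.
rewrite H; last by lia.
congr T; lia.
Qed.

Lemma T_edge (x y : 'I_n) : @geq_rel n F x y -> T x.+1 = T y.+1.
Proof.
case/orP => h.
- exact: T_eq_edge h.
- by symmetry; apply: T_eq_edge h.
Qed.

Lemma T_conn (x y : 'I_n) : connect (@geq_rel n F) x y -> T x.+1 = T y.+1.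
Proof.
case/connectP => p; elim: p x => [|z p IH] x /=; first by move=> _ ->.
case/andP => e pth ey; rewrite (T_edge e); exact: IH.
Qed.

Lemma T_comp (C : {set 'I_n}) : C \in comps n F -> forall u v : 'I_n,
  u \in C -> v \in C -> T u.+1 = T v.+1.
Proof.
case/in_comps => w -> u v; rewrite !inE => /T_conn hu /T_conn hv.
by rewrite -hu -hv.
Qed.

Lemma cofs_comp (C : {set 'I_n}) (u : 'I_n) : C \in comps n F -> u \in C ->
  coloring_of_string T C = T u.+1.
Proof.
move=> hC hu; apply: (cofs_val hu) => v hv; exact: (T_comp hC hv hu).
Qed.

Lemma cofs_proper : proper_coloring F (coloring_of_string (n:=n) T).
Proof.
move=> C C' hC hC' /existsP [u /andP [hu /existsP [v /andP [hv /andP [huv hF]]]]].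
rewrite (cofs_comp hC hu) (cofs_comp hC' hv) => e.
have hin : inside n u.+2 v by case/and3P: hF.
have hin2 : inside n u.+1 v.+1 by rewrite /inside; move: (ltn_ord v); lia.
have hpT : pal T u.+2 v by rewrite (has_SP HT hin); case/and3P: hF.
have hnS : ~~ pal S u.+1 v.+1.
  case/and3P: hF => _ _ /=; have /negbTE -> : v != n :> nat by rewrite neq_ltn ltn_ord.
  by [].
have := pal_ext (a:=u.+2) (b:=v) ltac:(by []) ltac:(lia) hpT e.
by rewrite (has_SP HT hin2) (negbTE hnS).
Qed.

Lemma cofs_sofc i : 1 <= i <= n ->
  string_of_coloring F (coloring_of_string (n:=n) T) i = T i.
Proof.
move=> hi; have hu : i.-1 < n by lia.
have -> : i = (Ordinal hu).+1 by rewrite /=; lia.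
rewrite sofc_val; apply: cofs_comp; [exact: comps_comp | exact: comp_self].
Qed.

End T.

Lemma sofc_cofs (Sigma : Type) (psi : {set 'I_n} -> Sigma) (C : {set 'I_n}) :
  C \in comps n F -> coloring_of_string (string_of_coloring F psi) C = psi C.
Proof.
case/in_comps => w ->; rewrite (cofs_val (comp_self F w)).
  by rewrite sofc_val.
by move=> v hv; rewrite !sofc_val (comp_eq hv).
Qed.

Lemma undup_size_eq (X : eqType) (s1 s2 : seq X) : s1 =i s2 ->
  size (undup s1) = size (undup s2).
Proof.
move=> H; apply: perm_size; apply: uniq_perm; rewrite ?undup_uniq // => x.
by rewrite !mem_undup H.
Qed.

Lemma nsym_ncolors (Sigma : eqType) (psi : {set 'I_n} -> Sigma) :
  nsym n (string_of_coloring F psi) = ncolors F psi.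
Proof.
apply: undup_size_eq => x; apply/mapP/mapP => [[i hi ->]|[C hC ->]].
- move: hi; rewrite mem_iota => hi.
  have hu : i.-1 < n by lia.
  have -> : i = (Ordinal hu).+1 by rewrite /=; lia.
  rewrite sofc_val; exists (Defs.comp F (Ordinal hu)) => //.
  by rewrite mem_enum comps_comp.
- move: hC; rewrite mem_enum => /in_comps [u ->].
  exists u.+1; last by rewrite sofc_val.
  by rewrite mem_iota; move: (ltn_ord u); lia.
Qed.

Lemma compress (Sigma : eqType) (f : {set 'I_n} -> Sigma) (l : seq Sigma) :
  proper_coloring F f -> (forall C, C \in comps n F -> f C \in l) ->
  proper_coloring F (fun C => index (f C) l) /\
  (forall C, C \in comps n F -> index (f C) l < size l).
Proof.
move=> pr hl; split.
- move=> C C' hC hC' adj e; apply: (pr C C' hC hC' adj).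
  exact: (index_inj (f C) (hl _ hC) (hl _ hC') e).
- by move=> C hC; rewrite index_mem hl.
Qed.

End M2.

Section M3.
Variable Sigma0 : eqType.
Variable n : nat.
Variable S : nat -> Sigma0.
Local Notation F := (fingerprint n S).
Local Notation A := (manacher n S).

Lemma ncolors_le (psi : {set 'I_n} -> nat) k :
  (forall C, C \in comps n F -> psi C < k) -> ncolors F psi <= k.
Proof.
move=> bd; rewrite /ncolors -(size_iota 0 k).
apply: uniq_leq_size (undup_uniq _) _ => x; rewrite mem_undup => /mapP [C hC ->].
by rewrite mem_iota /= add0n bd // -mem_enum.
Qed.

Lemma cofs_mem (Sigma : eqType) (T : nat -> Sigma) (HT : has_manacher n T A)
  (C : {set 'I_n}) : C \in comps n F ->
  coloring_of_string (n:=n) T C \in undup [seq T i | i <- iota 1 n].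
Proof.
move=> hC; have [u eC] := in_comps hC.
rewrite (cofs_comp HT hC (u:=u)); last by rewrite eC comp_self.
rewrite mem_undup; apply: map_f; rewrite mem_iota; move: (ltn_ord u); lia.
Qed.

End M3.
Unset Implicit Arguments.

Theorem theorem4p1 (Sigma0 : eqType) (n : nat) (S : nat -> Sigma0) :
  let A := manacher n S in
  let F := fingerprint n S in
  (* (i) *)
  (forall (Sigma : eqType) (psi : {set 'I_n} -> Sigma) (k : nat),
      proper_coloring F psi -> ncolors F psi = k ->
      has_manacher n (string_of_coloring F psi) A /\
      nsym n (string_of_coloring F psi) = k) /\
  (* (ii) *)
  (forall (Sigma : eqType) (T : nat -> Sigma),
      has_manacher n T A ->
      (forall C, C \in comps n F -> forall u v : 'I_n,
          u \in C -> v \in C -> T u.+1 = T v.+1) /\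
      proper_coloring F (coloring_of_string (n:=n) T) /\
      (forall i, 1 <= i <= n -> string_of_coloring F (coloring_of_string (n:=n) T) i = T i)) /\
  (forall (Sigma : eqType) (psi : {set 'I_n} -> Sigma),
      proper_coloring F psi ->
      forall C, C \in comps n F -> coloring_of_string (string_of_coloring F psi) C = psi C) /\
  (* in particular *)
  (forall k, is_min_symbols n A k <-> is_chromatic_number n F k).
Proof.
cbv zeta.
split.
  move=> Sigma psi k pr <-; split; [exact: sofc_manacher | exact: nsym_ncolors].
split.
  move=> Sigma T HT; split; first exact: T_comp HT.
  by split; [exact: cofs_proper HT | exact: cofs_sofc HT].
split.
  by move=> Sigma psi _ C hC; exact: sofc_cofs.
move=> k; split.
- case=> [[T0 [HT0 hk]] LB]; split.
  + have [pr bd] := compress (cofs_proper HT0) (cofs_mem HT0).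
    exists (fun C => index (coloring_of_string (n:=n) T0 C)
                      (undup [seq T0 i | i <- iota 1 n])); split => // C hC.
    by rewrite -hk; exact: bd.
  + move=> k' psi pr bd.
    have := LB nat (string_of_coloring (fingerprint n S) psi) (sofc_manacher pr).
    rewrite nsym_ncolors => h; apply: leq_trans h _; exact: ncolors_le.
- case=> [[psi [pr bd]] MIN].
  have hnc : ncolors (fingerprint n S) psi <= k by exact: ncolors_le.
  have hk : k <= ncolors (fingerprint n S) psi.
    have hl : forall C, C \in comps n (fingerprint n S) ->
        psi C \in undup [seq psi C | C <- enum (comps n (fingerprint n S))].
      by move=> C hC; rewrite mem_undup map_f // mem_enum.
    have [pr' bd'] := compress pr hl.
    exact: MIN _ _ pr' bd'.
  split.
  + exists (string_of_coloring (fingerprint n S) psi); split; first exact: sofc_manacher.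
    by rewrite nsym_ncolors; apply/eqP; rewrite eqn_leq hnc hk.
  + move=> Sigma T HT.
    have [pr' bd'] := compress (cofs_proper HT) (cofs_mem HT).
    exact: MIN _ _ pr' bd'.
Qed.
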